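(* Let $N_1=(S_1,A,L_1,AP,V_1,\{s_0^1\})$ and $N_2=(S_2,A,L_2,AP,V_2,\{s_0^2\})$ be deterministic APAs in SVNF with $N_1\not\preceq N_2$, and let $P$ be the counterexample PA constructed in the context. Then $P\models N_1$ and $P\not\models N_2$.
   Context: For a finite set $S$, $\mathrm{Dist}(S)$ is the set of probability distributions on $S$; $C(S)$ is a set of constraints, each $\phi\in C(S)$ determining $Sat(\phi)\subseteq\mathrm{Dist}(S)$. An APA is a tuple $N=(S,A,L,AP,V,S_0)$ with finite state set $S$, initial states $S_0\subseteq S$, finite action set $A$, finite set $AP$ of atomic propositions, $L:S\times A\times C(S)\to\{\top,?,\bot\}$ ($\top$: must, $?$: may, $\bot$: no transition) and $V:S\to 2^{2^{AP}}$. A PA $P=(S,A,L,AP,V,s_0)$ has one initial state, $L:S\times A\times\mathrm{Dist}(S)\to\{\top,\bot\}$, $V:S\to 2^{AP}$; it is regarded as an APA with valuation sets $\{V(s)\}$ and each distribution $\mu$ as a constraint with $Sat(\mu)=\{\mu\}$. An APA is in SVNF if $|V(s)|\le1$ for all $s$; it is deterministic if it has exactly one initial state, for all $s,a$ at most one $\phi$ has $L(s,a,\phi)\ne\bot$, and for all $s,a,\phi$ with $L(s,a,\phi)\ne\bot$ and distinct states $s',s''$ with $V(s')\cap V(s'')\ne\emptyset$ there are no $\mu,\mu'\in Sat(\phi)$ with $\mu(s')>0$ and $\mu'(s'')>0$. For $\mu\in\mathrm{Dist}(S)$, $\mu'\in\mathrm{Dist}(S')$, $\mathcal Q\subseteq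 S\times S'$, $\mu\Subset_{\mathcal Q}\mu'$ means there is $\delta:S\to(S'\to[0,1])$ with $\delta(s)$ a distribution whenever $\mu(s)>0$, $\sum_s\mu(s)\delta(s)(s')=\mu'(s')$ for all $s'$, and $\delta(s)(s')>0\Rightarrow(s,s')\in\mathcal Q$. For APAs $M_1,M_2$ and $\mathcal Q$ a relation between their states, a pair $(s_1,s_2)$ satisfies the refinement conditions w.r.t. $\mathcal Q$ if: $V_1(s_1)\subseteq V_2(s_2)$; whenever $L_2(s_2,a,\phi_2)=\top$ there is $\phi_1$ with $L_1(s_1,a,\phi_1)=\top$ and every $\mu_1\in Sat(\phi_1)$ has some $\mu_2\in Sat(\phi_2)$ with $\mu_1\Subset_{\mathcal Q}\mu_2$; whenever $L_1(s_1,a,\phi_1)\ne\bot$ there is $\phi_2$ with $L_2(s_2,a,\phi_2)\ne\bot$ and every $\mu_1\in Sat(\phi_1)$ has some $\mu_2\in Sat(\phi_2)$ with $\mu_1\Subset_{\mathcal Q}\mu_2$. A refinement relation is a $\mathcal Q$ all of whose pairs satisfy these conditions w.r.t. $\mathcal Q$; $M_1\preceq M_2$ if some refinement relation relates each initial state of $M_1$ to some initial state of $M_2$; for a PA $P$, $P\models N$ means $P\preceq N$. For $N$ in SVNF, $\mathsf{succ}_{s,a}(v)=\{s'\mid V(s')=\{v\},\ \exists\phi\,\exists\mu\in Sat(\phi):L(s,a,\phi)\ne\bot,\mu(s')>0\}$; for deterministic $N$ this has at most one element, identified with that element (or $\emptyset$); for $s_1'\in S_1$ with $V_1(s_1')=\{v\}$,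 $\mathsf{succ}_{s_2,e}(s_1'):=\mathsf{succ}_{s_2,e}(v)$ computed in $N_2$. Maximal relation and index: $\mathcal R$ is the maximal refinement relation between $N_1$ and $N_2$ (union of all refinement relations). $\mathcal R_0=S_1\times S_2$; $\mathcal R_{k+1}$ is the set of pairs of $\mathcal R_k$ satisfying the refinement conditions w.r.t. $\mathcal R_k$; $\mathrm{ind}(\mathcal R)=K$ is the least index with $\mathcal R_K=\mathcal R_{K+1}$ (then $\mathcal R_K=\mathcal R$); $\mathrm{ind}_{\mathcal R}(s_1,s_2)=\min(\max\{k\mid(s_1,s_2)\in\mathcal R_k\},K)$. Cases: $(s_1,s_2)\in S_1\times S_2$ is in case 1 if $(s_1,s_2)\in\mathcal R$, case 2 if $V_1(s_1)\ne V_2(s_2)$, case 3 if $(s_1,s_2)\notin\mathcal R$ and $V_1(s_1)=V_2(s_2)$. For $(s_1,s_2)$ in case 3 and $e\in A$: $e\in B_a(s_1,s_2)$ iff some $\phi_1$ has $L_1(s_1,e,\phi_1)=\top$ and $L_2(s_2,e,\cdot)\equiv\bot$; $e\in B_b$ iff some $\phi_1$ has $L_1(s_1,e,\phi_1)=?$ and $L_2(s_2,e,\cdot)\equiv\bot$; $e\in B_c$ iff some $\phi_1$ has $L_1(s_1,e,\phi_1)\in\{?,\top\}$, some $\phi_2$ has $L_2(s_2,e,\phi_2)=?$, and some $\mu\in Sat(\phi_1)$ has $\mu\not\Subset_{\mathcal R}\mu'$ for all $\mu'\in Sat(\phi_2)$; $e\in B_d$ iff some $\phi_2$ has $L_2(s_2,e,\phi_2)=\top$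 and $L_1(s_1,e,\cdot)\equiv\bot$; $e\in B_e$ iff some $\phi_2$ has $L_2(s_2,e,\phi_2)=\top$ and some $\phi_1$ has $L_1(s_1,e,\phi_1)=?$; $e\in B_f$ iff some $\phi_2$ has $L_2(s_2,e,\phi_2)=\top$, some $\phi_1$ has $L_1(s_1,e,\phi_1)=\top$, and some $\mu\in Sat(\phi_1)$ has $\mu\not\Subset_{\mathcal R}\mu'$ for all $\mu'\in Sat(\phi_2)$. $B(s_1,s_2)$ is the union of these six (pairwise disjoint) sets. $\mathrm{Breaking}(s_1,s_2)$ (for $V_1(s_1)=V_2(s_2)$, $\mathrm{ind}_{\mathcal R}(s_1,s_2)=k<\mathrm{ind}(\mathcal R)$) is the set of $a\in A$ with $a\in B_a\cup B_b\cup B_d\cup B_e$ (at $(s_1,s_2)$), or such that there exist $\phi_1,\phi_2$, $\mu_1\in Sat(\phi_1)$ with $L_1(s_1,a,\phi_1)\ne\bot$, $L_2(s_2,a,\phi_2)\ne\bot$ and $\mu_1\not\Subset_{\mathcal R_k}\mu_2$ for all $\mu_2\in Sat(\phi_2)$. Construction of $P=(S,A,L,AP,V,s_0)$: $S=S_1\times(S_2\cup\{\bot\})$, $s_0=(s_0^1,s_0^2)$, $V(s_1,s_2)=v$ where $V_1(s_1)=\{v\}$. For $\mu_1\in\mathrm{Dist}(S_1)$ let $\mu_1^\bot\in\mathrm{Dist}(S)$ be $\mu_1^\bot(s_1',s_2')=\mu_1(s_1')$ if $s_2'=\bot$ and $0$ otherwise. For $(s_1,s_2)$, $e$, and $\mu_1\in\mathrm{Dist}(S_1)$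 let $\widehat{\mu_1}\in\mathrm{Dist}(S)$ be $\widehat{\mu_1}(s_1',s_2')=\mu_1(s_1')$ if $s_2'=\mathsf{succ}_{s_2,e}(s_1')$, or if $\mathsf{succ}_{s_2,e}(s_1')=\emptyset$ and $s_2'=\bot$; and $0$ otherwise. Transitions of $(s_1,s_2)$: if $(s_1,s_2)$ is in case 1 or 2 or $s_2=\bot$, then for every $a$ and $\phi_1$ with $L_1(s_1,a,\phi_1)=\top$, choose an arbitrary $\mu_1\in Sat(\phi_1)$ and set $L((s_1,s_2),a,\mu_1^\bot)=\top$. Otherwise $(s_1,s_2)$ is in case 3: for every $a\notin B(s_1,s_2)$ and $\phi_1$ with $L_1(s_1,a,\phi_1)=\top$, choose an arbitrary $\mu_1\in Sat(\phi_1)$ and set $L((s_1,s_2),a,\mu_1^\bot)=\top$; and for $e\in B(s_1,s_2)$: if $e\in B_a\cup B_b$, take $\phi_1$ with $L_1(s_1,e,\phi_1)\ne\bot$, an arbitrary $\mu_1\in Sat(\phi_1)$, and set $L((s_1,s_2),e,\mu_1^\bot)=\top$; if $e\in B_d\cup B_e$, $P$ has no $e$-transition from $(s_1,s_2)$; if $e\in B_c\cup B_f$, take the unique $\phi_1,\phi_2$ with $L_1(s_1,e,\phi_1)\ne\bot$, $L_2(s_2,e,\phi_2)\ne\bot$, and if $e\in\mathrm{Breaking}(s_1,s_2)$ let $\mu_1\in Sat(\phi_1)$ be a distribution such that (i) some $s_1'$ with $\mu_1(s_1')>0$ has $\mathsf{succ}_{s_2,e}(s_1')=\emptyset$, or (ii)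 $s_2'\mapsto\sum_{\{s_1'\mid s_2'=\mathsf{succ}_{s_2,e}(s_1')\}}\mu_1(s_1')$ is not in $Sat(\phi_2)$, or (iii) some $s_1',s_2'$ with $\mu_1(s_1')>0$, $s_2'=\mathsf{succ}_{s_2,e}(s_1')$ have $\mathrm{ind}_{\mathcal R}(s_1',s_2')<\mathrm{ind}_{\mathcal R}(s_1,s_2)$ (such a $\mu_1$ exists); otherwise let $\mu_1$ be an arbitrary distribution in $Sat(\phi_1)$ with $\mu_1\not\Subset_{\mathcal R}\mu_2$ for all $\mu_2\in Sat(\phi_2)$; in both cases set $L((s_1,s_2),e,\widehat{\mu_1})=\top$. All other values of $L$ are $\bot$. *)

(* Defs.v *)
From HB Require Import structures.
From mathcomp Require Import all_boot all_order all_algebra.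
From mathcomp Require Import boolp reals.
From mathcomp Require classical_sets.

Set Implicit Arguments.
Unset Strict Implicit.
Unset Printing Implicit Defensive.

Import Order.TTheory GRing.Theory Num.Theory.

(* Transition modalities: Must = ⊤, May = ?, No = ⊥. *)
Inductive tval := Must | May | No.

Section APAs.
Context (R : realType) (A AP : finType).
Local Open Scope ring_scope.

Definition is_dist (S : finType) (mu : S -> R) : Prop :=
  (forall s, 0 <= mu s) /\ \sum_(s : S) mu s = 1.

(* An APA over state set S (finite) and constraint set C(S) = C,
   each constraint phi determining Sat phi ⊆ Dist(S) (see [APA_wf]). *)
Record APA (S : finType) (C : Type) := mkAPA {
  Sat  : C -> (S -> R) -> Prop;
  L    : S -> A -> C -> tval;
  V    : S -> {set {set AP}};
  init : {set S}
}.

Definition APA_wf S C (N : APA S C) : Prop :=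
  forall phi mu, Sat N phi mu -> is_dist mu.

Record PA (S : finType) := mkPA {
  pL  : S -> A -> (S -> R) -> Prop;   (* true = ⊤, false = ⊥ *)
  pV  : S -> {set AP};
  ps0 : S
}.

Definition APA_of_PA S (P : PA S) : APA S (S -> R) :=
  @mkAPA S (S -> R) (fun mu nu => nu = mu)
    (fun s a mu => if `[< pL P s a mu >] then Must else No)
    (fun s => [set pV P s]) [set ps0 P].

Definition lift_rel (S S' : finType) (Q : S -> S' -> Prop)
    (mu : S -> R) (mu' : S' -> R) : Prop :=
  exists delta : S -> S' -> R,
    (forall s s', 0 <= delta s s' <= 1) /\
    (forall s, 0 < mu s -> is_dist (delta s)) /\
    (forall s', \sum_(s : S) mu s * delta s s' = mu' s') /\
    (forall s s', 0 < delta s s' -> Q s s').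

Section Refinement.
Context (S1 S2 : finType) (C1 C2 : Type) (M1 : APA S1 C1) (M2 : APA S2 C2).

Definition ref_cond (Q : S1 -> S2 -> Prop) (s1 : S1) (s2 : S2) : Prop :=
  [/\ V M1 s1 \subset V M2 s2,
      (forall a phi2, L M2 s2 a phi2 = Must ->
         exists phi1, L M1 s1 a phi1 = Must /\
           forall mu1, Sat M1 phi1 mu1 ->
             exists mu2, Sat M2 phi2 mu2 /\ lift_rel Q mu1 mu2) &
      (forall a phi1, L M1 s1 a phi1 <> No ->
         exists phi2, L M2 s2 a phi2 <> No /\
           forall mu1, Sat M1 phi1 mu1 ->
             exists mu2, Sat M2 phi2 mu2 /\ lift_rel Q mu1 mu2)].

Definition is_refinement (Q : S1 -> S2 -> Prop) : Prop :=
  forall s1 s2, Q s1 s2 -> ref_cond Q s1 s2.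

Definition refines : Prop :=
  exists Q, is_refinement Q /\
    forall s1, s1 \in init M1 -> exists2 s2, s2 \in init M2 & Q s1 s2.

Definition Rmax (s1 : S1) (s2 : S2) : Prop :=
  exists Q, is_refinement Q /\ Q s1 s2.

Fixpoint Rk (k : nat) : S1 -> S2 -> Prop :=
  match k with
  | 0 => fun _ _ => True
  | k'.+1 => fun s1 s2 => Rk k' s1 s2 /\ ref_cond (Rk k') s1 s2
  end.

Definition Rk_stable (K : nat) : Prop :=
  forall s1 s2, Rk K s1 s2 <-> Rk K.+1 s1 s2.

Definition indR : nat :=
  classical_sets.xget 0%N (fun K => Rk_stable K /\ forall k, Rk_stable k -> (K <= k)%N).

(* ind_R(s1,s2) = min(max{k | (s1,s2) in R_k}, K); when the max does not
   exist (the pair is in every R_k) this is K. *)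
Definition indpair (s1 : S1) (s2 : S2) : nat :=
  minn (classical_sets.xget indR
          (fun m => Rk m s1 s2 /\ forall k, Rk k s1 s2 -> (k <= m)%N))
       indR.

End Refinement.

Definition satisfies S (P : PA S) S' C' (N : APA S' C') : Prop :=
  refines (APA_of_PA P) N.

Definition SVNF S C (N : APA S C) : Prop := forall s, (#|V N s| <= 1)%N.

Definition deterministic S C (N : APA S C) : Prop :=
  [/\ #|init N| = 1%N,
      (forall s a phi phi', L N s a phi <> No -> L N s a phi' <> No ->
          phi = phi') &
      (forall s a phi s' s'', L N s a phi <> No -> s' <> s'' ->
          V N s' :&: V N s'' != set0 ->
          ~ exists mu mu', [/\ Sat N phi mu, Sat N phi mu',
                               0 < mu s' & 0 < mu' s''])].

Section Construction.
Context (S1 S2 : finType) (C1 C2 : Type) (N1 : APA S1 C1) (N2 : APA S2 C2).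

Definition RR := Rmax N1 N2.
Definition RRk := Rk N1 N2.
Definition ind_pair := indpair N1 N2.
Definition ind_R := indR N1 N2.

Definition case1 s1 s2 := RR s1 s2.
Definition case2 s1 s2 := V N1 s1 <> V N2 s2.
Definition case3 s1 s2 := ~ RR s1 s2 /\ V N1 s1 = V N2 s2.

Definition no_match (Q : S1 -> S2 -> Prop) (mu : S1 -> R) (phi2 : C2) :=
  forall mu', Sat N2 phi2 mu' -> ~ lift_rel Q mu mu'.

Definition Ba s1 s2 e := (exists phi1, L N1 s1 e phi1 = Must) /\
                         (forall phi2, L N2 s2 e phi2 = No).
Definition Bb s1 s2 e := (exists phi1, L N1 s1 e phi1 = May) /\
                         (forall phi2, L N2 s2 e phi2 = No).
Definition Bc s1 s2 e := exists phi1 phi2,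
  [/\ L N1 s1 e phi1 <> No, L N2 s2 e phi2 = May &
      exists2 mu, Sat N1 phi1 mu & no_match RR mu phi2].
Definition Bd s1 s2 e := (exists phi2, L N2 s2 e phi2 = Must) /\
                         (forall phi1, L N1 s1 e phi1 = No).
Definition Be s1 s2 e := (exists phi2, L N2 s2 e phi2 = Must) /\
                         (exists phi1, L N1 s1 e phi1 = May).
Definition Bf s1 s2 e := exists phi1 phi2,
  [/\ L N2 s2 e phi2 = Must, L N1 s1 e phi1 = Must &
      exists2 mu, Sat N1 phi1 mu & no_match RR mu phi2].
Definition inB s1 s2 e :=
  Ba s1 s2 e \/ Bb s1 s2 e \/ Bc s1 s2 e \/ Bd s1 s2 e \/ Be s1 s2 e \/ Bf s1 s2 e.

Definition Breaking s1 s2 e :=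
  (Ba s1 s2 e \/ Bb s1 s2 e \/ Bd s1 s2 e \/ Be s1 s2 e) \/
  exists phi1 phi2 mu1,
    [/\ L N1 s1 e phi1 <> No, L N2 s2 e phi2 <> No, Sat N1 phi1 mu1 &
        no_match (RRk (ind_pair s1 s2)) mu1 phi2].

(* succ_{s2,e}(s1') := succ_{s2,e}(v) computed in N2, where V1(s1') = {v};
   None encodes the empty set. *)
Definition succ_rel (s2 : S2) (e : A) (s1' : S1) (s2' : S2) : Prop :=
  V N2 s2' = V N1 s1' /\
  exists phi mu, [/\ L N2 s2 e phi <> No, Sat N2 phi mu & 0 < mu s2'].
Definition succ (s2 : S2) (e : A) (s1' : S1) : option S2 :=
  [pick s2' | `[< succ_rel s2 e s1' s2' >] ].

Definition Pst := (S1 * option S2)%type.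

Definition dist_bot (mu1 : S1 -> R) : Pst -> R :=
  fun s => if s.2 is None then mu1 s.1 else 0.

Definition dist_hat (s2 : S2) (e : A) (mu1 : S1 -> R) : Pst -> R :=
  fun s => if s.2 == succ s2 e s.1 then mu1 s.1 else 0.

Definition push (s2 : S2) (e : A) (mu1 : S1 -> R) : S2 -> R :=
  fun s2' => \sum_(s1' : S1 | succ s2 e s1' == Some s2') mu1 s1'.

(* conditions (i), (ii), (iii) of the construction *)
Definition breaking_choice (s1 : S1) (s2 : S2) (e : A) (phi2 : C2)
    (mu1 : S1 -> R) : Prop :=
  (exists s1', 0 < mu1 s1' /\ succ s2 e s1' = None) \/
  ~ Sat N2 phi2 (push s2 e mu1) \/
  (exists s1' s2', [/\ 0 < mu1 s1', succ s2 e s1' = Some s2' &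
                       (ind_pair s1' s2' < ind_pair s1 s2)%N]).

Definition standard (s : Pst) (a : A) : Prop :=
  match s with
  | (_, None) => True
  | (s1, Some s2) => case1 s1 s2 \/ case2 s1 s2 \/ (case3 s1 s2 /\ ~ inB s1 s2 a)
  end.

Definition chooser := Pst -> A -> C1 -> (S1 -> R).

(* the "arbitrary choices" are given by ch; [used s a phi1] says that
   ch s a phi1 is used by the construction *)
Definition used (s : Pst) (a : A) (phi1 : C1) : Prop :=
  (standard s a /\ L N1 s.1 a phi1 = Must) \/
  (exists s2, [/\ s.2 = Some s2, case3 s.1 s2,
     Ba s.1 s2 a \/ Bb s.1 s2 a \/ Bc s.1 s2 a \/ Bf s.1 s2 a &
     L N1 s.1 a phi1 <> No]).

Definition valid_chooser (ch : chooser) : Prop :=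
  (forall s a phi1, used s a phi1 -> Sat N1 phi1 (ch s a phi1)) /\
  (forall s1 s2 a phi1 phi2,
     case3 s1 s2 -> Bc s1 s2 a \/ Bf s1 s2 a ->
     L N1 s1 a phi1 <> No -> L N2 s2 a phi2 <> No ->
     (Breaking s1 s2 a ->
        breaking_choice s1 s2 a phi2 (ch (s1, Some s2) a phi1)) /\
     (~ Breaking s1 s2 a -> no_match RR (ch (s1, Some s2) a phi1) phi2)).

Definition cex_L (ch : chooser) (s : Pst) (a : A) (mu : Pst -> R) : Prop :=
  (standard s a /\
     exists phi1, L N1 s.1 a phi1 = Must /\ mu = dist_bot (ch s a phi1)) \/
  (exists s2, [/\ s.2 = Some s2, case3 s.1 s2, Ba s.1 s2 a \/ Bb s.1 s2 a &
     exists phi1, L N1 s.1 a phi1 <> No /\ mu = dist_bot (ch s a phi1)]) \/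
  (exists s2, [/\ s.2 = Some s2, case3 s.1 s2, Bc s.1 s2 a \/ Bf s.1 s2 a &
     exists phi1, L N1 s.1 a phi1 <> No /\ mu = dist_hat s2 a (ch s a phi1)]).
(* (for a in B_d ∪ B_e there is no transition: none of the disjuncts apply) *)

Definition cex_V (s : Pst) : {set AP} := odflt set0 [pick v in V N1 s.1].

Definition cexPA (s01 : S1) (s02 : S2) (ch : chooser) : PA Pst :=
  @mkPA Pst (cex_L ch) cex_V (s01, Some s02).

End Construction.
End APAs.

(* Main.v *)
Require Import Defs.
From HB Require Import structures.
From mathcomp Require Import all_boot all_order all_algebra.
From mathcomp Require Import boolp reals.
From mathcomp Require classical_sets.
From mathcomp Require Import lra.
Set Implicit Arguments.
Unset Strict Implicit.
Unset Printing Implicit Defensive.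
Import Order.TTheory GRing.Theory Num.Theory.
Local Open Scope ring_scope.

Section Gen.
Context (R : realType) (A AP : finType) (S1 S2 : finType) (C1 C2 : Type)
  (M1 : APA R A AP S1 C1) (M2 : APA R A AP S2 C2).

Lemma lift_rel_mono (S S' : finType) (Q Q' : S -> S' -> Prop) (mu : S -> R) mu' :
  (forall x y, Q x y -> Q' x y) -> lift_rel Q mu mu' -> lift_rel Q' mu mu'.
Proof.
move=> HQ [d [h1 [h2 [h3 h4]]]]; exists d; split=> //; split=> //; split=> //.
by move=> s s' /h4; apply: HQ.
Qed.

Lemma ref_cond_mono (Q Q' : S1 -> S2 -> Prop) s1 s2 :
  (forall x y, Q x y -> Q' x y) -> ref_cond M1 M2 Q s1 s2 -> ref_cond M1 M2 Q' s1 s2.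
Proof.
move=> HQ [hV hM hm]; split=> //.
- move=> a phi2 /hM [phi1 [h1 h2]]; exists phi1; split=> // mu1 /h2 [mu2 [h3 h4]].
  by exists mu2; split=> //; apply: lift_rel_mono h4.
- move=> a phi1 /hm [phi2 [h1 h2]]; exists phi2; split=> // mu1 /h2 [mu2 [h3 h4]].
  by exists mu2; split=> //; apply: lift_rel_mono h4.
Qed.

Lemma Rmax_ref : is_refinement M1 M2 (Rmax M1 M2).
Proof.
move=> s1 s2 [Q [HQ q]]; apply: ref_cond_mono (HQ _ _ q).
by move=> x y qxy; exists Q.
Qed.

Lemma Rmax_Rk k s1 s2 : Rmax M1 M2 s1 s2 -> Rk M1 M2 k s1 s2.
Proof.
move=> [Q [HQ q]]; elim: k s1 s2 q => [//|k IH] s1 s2 q /=.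
split; first exact: IH.
by apply: ref_cond_mono (HQ _ _ q) => x y /IH.
Qed.

Lemma Rk_le k l s1 s2 : (k <= l)%N -> Rk M1 M2 l s1 s2 -> Rk M1 M2 k s1 s2.
Proof.
elim: l => [|l IH]; first by rewrite leqn0 => /eqP ->.
rewrite leq_eqVlt => /orP [/eqP -> //| ]; rewrite ltnS => kl [h _].
exact: IH.
Qed.

Lemma stable_ex : exists K, Rk_stable M1 M2 K.
Proof.
apply/not_existsP => Hn.
pose cnt k := #|[set p : S1 * S2 | `[< Rk M1 M2 k p.1 p.2 >]]|.
have step k : (cnt k.+1 < cnt k)%N.
  apply: proper_card; rewrite properEneq; apply/andP; split.
  - apply/eqP => E; apply: (Hn k) => s1 s2; split; last by case.
    move=> h; have : (s1, s2) \in [set p : S1 * S2 | `[< Rk M1 M2 k p.1 p.2 >]].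
      by rewrite inE; apply/asboolP.
    by rewrite -E inE => /asboolP.
  - apply/subsetP => p; rewrite !inE => /asboolP [h _]; exact/asboolP.
have key k : (cnt k + k <= cnt 0)%N.
  elim: k => [|k IH]; first by rewrite addn0.
  by apply: leq_trans IH; rewrite addnS ltn_add2r.
by have := key (cnt 0).+1; rewrite addnS ltnNge leq_addl.
Qed.

Lemma indR_stable : Rk_stable M1 M2 (indR M1 M2).
Proof.
have [K HK] := stable_ex.
have exP : exists n, `[< Rk_stable M1 M2 n >] by exists K; exact/asboolP.
case: (ex_minnP exP) => m /asboolP Hm Hmin.
pose P := fun K => Rk_stable M1 M2 K /\ forall k, Rk_stable M1 M2 k -> (K <= k)%N.
have exP' : exists x, P x.
  exists m; split=> // k hk; by apply: Hmin; exact/asboolP.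
by have [] : P (indR M1 M2) := classical_sets.xgetPex 0%N exP'.
Qed.

Lemma RkK_Rmax s1 s2 : Rk M1 M2 (indR M1 M2) s1 s2 -> Rmax M1 M2 s1 s2.
Proof.
move=> h; exists (Rk M1 M2 (indR M1 M2)); split=> //.
by move=> x y /indR_stable [].
Qed.

Lemma indpair_le s1 s2 : (indpair M1 M2 s1 s2 <= indR M1 M2)%N.
Proof. exact: geq_minr. Qed.

Lemma indpair_Rmax s1 s2 : Rmax M1 M2 s1 s2 -> indpair M1 M2 s1 s2 = indR M1 M2.
Proof.
move=> h; rewrite /indpair classical_sets.xgetPN ?minnn //.
move=> m [_ hm]; have := hm m.+1 (Rmax_Rk _ h); by rewrite ltnn.
Qed.

Lemma indpair_notRmax s1 s2 : ~ Rmax M1 M2 s1 s2 ->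
  [/\ Rk M1 M2 (indpair M1 M2 s1 s2) s1 s2,
      ~ Rk M1 M2 (indpair M1 M2 s1 s2).+1 s1 s2 &
      (indpair M1 M2 s1 s2 < indR M1 M2)%N].
Proof.
move=> nR.
have nK : ~ Rk M1 M2 (indR M1 M2) s1 s2 by move=> /RkK_Rmax.
have exP : exists n, `[< Rk M1 M2 n s1 s2 >] by exists 0%N; exact/asboolP.
have ubP : forall n, `[< Rk M1 M2 n s1 s2 >] -> (n <= indR M1 M2)%N.
  move=> n /asboolP h; rewrite leqNgt; apply/negP => lt.
  by apply: nK; apply: Rk_le h; exact: ltnW.
case: (ex_maxnP exP ubP) => m /asboolP Hm Hmax.
pose P := fun m => Rk M1 M2 m s1 s2 /\ forall k, Rk M1 M2 k s1 s2 -> (k <= m)%N.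
have exP' : exists x, P x.
  exists m; split=> // k hk; apply: Hmax; exact/asboolP.
have Px : P (classical_sets.xget (indR M1 M2) P) := classical_sets.xgetPex _ exP'.
move: Px; set x := classical_sets.xget _ _ => -[hx hxm].
have xK : (x < indR M1 M2)%N.
  rewrite ltnNge; apply/negP => le; apply: nK; exact: Rk_le hx.
have -> : indpair M1 M2 s1 s2 = x by rewrite /indpair -/x; apply/minn_idPl; exact: ltnW.
split=> // h; have := hxm _ h; by rewrite ltnn.
Qed.

End Gen.

Set Implicit Arguments.
Unset Strict Implicit.
Unset Printing Implicit Defensive.
Import Order.TTheory GRing.Theory Num.Theory.
Local Open Scope ring_scope.

Section Main.
Context (R : realType) (A AP : finType) (S1 S2 : finType) (C1 C2 : Type)
  (N1 : APA R A AP S1 C1) (N2 : APA R A AP S2 C2)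
  (s01 : S1) (s02 : S2) (ch : chooser R A S1 S2 C1).
Hypothesis (wf1 : APA_wf N1) (wf2 : APA_wf N2) (sv2 : SVNF N2)
  (det1 : deterministic N1) (det2 : deterministic N2)
  (V1 : forall s1, #|V N1 s1| = 1) (vch : valid_chooser N1 N2 ch).

Lemma cexV_eq (p : Pst S1 S2) : V N1 p.1 = [set cex_V N1 p].
Proof.
rewrite /cex_V; case: pickP => [v vin|H0] /=.
  have /cards1P [x Ex] : #|V N1 p.1| == 1%N by rewrite V1.
  by move: vin; rewrite Ex inE => /eqP ->.
by have := V1 p.1; rewrite (eq_card0 H0).
Qed.

Lemma lift_proj (mu : S1 -> R) (nu : Pst S1 S2 -> R) :
  (forall s1, \sum_(x : option S2) nu (s1, x) = mu s1) ->
  lift_rel (fun (p : Pst S1 S2) s => p.1 = s) nu mu.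
Proof.
move=> Hs; exists (fun p s => (p.1 == s)%:R); split; [|split; [|split]].
- by move=> p s; case: (p.1 == s); rewrite ?ler01 ?lexx ?le0r.
- move=> p _; split; first by move=> s; case: (p.1 == s).
  rewrite (bigD1 p.1) //= eqxx big1 ?addr0 // => s /negbTE; by rewrite eq_sym => ->.
- move=> s'; rewrite -Hs.
  transitivity (\sum_(s1 : S1) \sum_(x : option S2) nu (s1, x) * (s1 == s')%:R).
    rewrite pair_bigA /=; apply: eq_bigr => -[s1 x] _ /=. done.
  rewrite (bigD1 s') //= [X in _ + X]big1 ?addr0; last first.
    move=> s1 ns1; rewrite (negbTE ns1); by apply: big1 => x _; rewrite mulr0.
  by apply: eq_bigr => x _; rewrite eqxx mulr1.
- move=> p s; case: eqP => // _; by rewrite ltxx.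
Qed.

Lemma lift_bot (mu : S1 -> R) :
  lift_rel (fun (p : Pst S1 S2) s => p.1 = s) (dist_bot mu) mu.
Proof.
apply: lift_proj => s1; rewrite (bigD1 None) //= big1 ?addr0 // => -[x|] //.
Qed.

Lemma lift_hat s2 a (mu : S1 -> R) :
  lift_rel (fun (p : Pst S1 S2) s => p.1 = s) (dist_hat N1 N2 s2 a mu) mu.
Proof.
apply: lift_proj => s1; rewrite /dist_hat (bigD1 (succ N1 N2 s2 a s1)) //= eqxx.
by rewrite big1 ?addr0 // => x /negbTE ->.
Qed.


Lemma cexL_must p a phi1 : L N1 p.1 a phi1 = Must ->
  exists nu, cex_L N1 N2 ch p a nu /\ Sat N1 phi1 (ch p a phi1) /\
    (nu = dist_bot (ch p a phi1) \/ exists s2, nu = dist_hat N1 N2 s2 a (ch p a phi1)).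
Proof.
move=> Hm.
case: (EM (standard N1 N2 p a)) => Hs.
  exists (dist_bot (ch p a phi1)); split; first by left; split=> //; exists phi1.
  split; last by left.
  by apply: vch.1; left.
case: p Hs Hm => s1 [s2|] Hs Hm; last by exfalso; apply: Hs.
have c3 : case3 N1 N2 s1 s2.
  split.
    by move=> h; apply: Hs; left.
  by apply: contrapT => h; apply: Hs; right; left.
have iB : inB N1 N2 s1 s2 a.
  by apply: contrapT => h; apply: Hs; right; right.
have HnN : L N1 s1 a phi1 <> No by rewrite /= in Hm; rewrite Hm.
case: iB => [B|[B|[B|[B|[B|B]]]]].
- exists (dist_bot (ch (s1, Some s2) a phi1)); split.
    by right; left; exists s2; split=> //; [left | exists phi1].
  split; last by left.
  by apply: vch.1; right; exists s2; split=> //; left.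
- exists (dist_bot (ch (s1, Some s2) a phi1)); split.
    by right; left; exists s2; split=> //; [right | exists phi1].
  split; last by left.
  by apply: vch.1; right; exists s2; split=> //; right; left.
- exists (dist_hat N1 N2 s2 a (ch (s1, Some s2) a phi1)); split.
    by right; right; exists s2; split=> //; [left | exists phi1].
  split; last by right; exists s2.
  by apply: vch.1; right; exists s2; split=> //; right; right; left.
- by case: B => _ /(_ phi1); rewrite /= in Hm; rewrite Hm.
- case: B => _ [phi1' H']; case: det1 => _ D _.
  have E : phi1 = phi1' by apply: (D s1 a) => //; rewrite H'.
  by rewrite /= in Hm; rewrite -E Hm in H'.
- exists (dist_hat N1 N2 s2 a (ch (s1, Some s2) a phi1)); split.
    by right; right; exists s2; split=> //; [right | exists phi1].
  split; last by right; exists s2.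
  by apply: vch.1; right; exists s2; split=> //; right; right; right.
Qed.

Lemma cexL_inv p a nu : cex_L N1 N2 ch p a nu ->
  exists phi1, L N1 p.1 a phi1 <> No /\ Sat N1 phi1 (ch p a phi1) /\
    (nu = dist_bot (ch p a phi1) \/ exists s2, nu = dist_hat N1 N2 s2 a (ch p a phi1)).
Proof.
case=> [[Hs [phi1 [Hm ->]]]|[[s2 [E c3 B [phi1 [HL ->]]]]|[s2 [E c3 B [phi1 [HL ->]]]]]].
- exists phi1; split; first by rewrite Hm.
  split; last by left.
  by apply: vch.1; left.
- exists phi1; split=> //; split; last by left.
  apply: vch.1; right; exists s2; split=> //; by case: B; tauto.
- exists phi1; split=> //; split; last by right; exists s2.
  apply: vch.1; right; exists s2; split=> //; by case: B; tauto.
Qed.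

Lemma part1 : init N1 = [set s01] -> satisfies (cexPA N1 N2 s01 s02 ch) N1.
Proof.
move=> I1; exists (fun (p : Pst S1 S2) s => p.1 = s); split; last first.
  by move=> p; rewrite inE => /eqP -> /=; exists s01; rewrite // I1 inE.
move=> p s <-; split.
- by rewrite /= cexV_eq.
- move=> a phi1 /cexL_must [nu [Hc [Hsat Hnu]]].
  exists nu; split; first by rewrite /= asboolT.
  move=> mu1 ->; exists (ch p a phi1); split=> //.
  by case: Hnu => [->|[s2 ->]]; [apply: lift_bot | apply: lift_hat].
- move=> a nu /=; case: asboolP => // Hc _.
  have [phi1 [HL [Hsat Hnu]]] := cexL_inv Hc.
  exists phi1; split=> // mu1 ->; exists (ch p a phi1); split=> //.
  by case: Hnu => [->|[s2 ->]]; [apply: lift_bot | apply: lift_hat].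
Qed.

End Main.

Set Implicit Arguments.
Unset Strict Implicit.
Unset Printing Implicit Defensive.
Import Order.TTheory GRing.Theory Num.Theory.
Local Open Scope ring_scope.

Section Main2.
Context (R : realType) (A AP : finType) (S1 S2 : finType) (C1 C2 : Type)
  (N1 : APA R A AP S1 C1) (N2 : APA R A AP S2 C2)
  (s01 : S1) (s02 : S2) (ch : chooser R A S1 S2 C1).
Hypothesis (wf1 : APA_wf N1) (wf2 : APA_wf N2) (sv2 : SVNF N2)
  (det1 : deterministic N1) (det2 : deterministic N2)
  (V1 : forall s1, #|V N1 s1| = 1) (vch : valid_chooser N1 N2 ch).
Context (Q : Pst S1 S2 -> S2 -> Prop)
  (HQ : is_refinement (APA_of_PA (cexPA N1 N2 s01 s02 ch)) N2 Q).

Lemma set1_card (T : finType) (X : {set T}) v : v \in X -> (#|X| <= 1)%N -> X = [set v].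
Proof.
move=> vin c; apply/esym/eqP; rewrite eqEcard sub1set vin /=.
by rewrite cards1.
Qed.

Lemma Vrel p s2 : Q p s2 -> V N2 s2 = V N1 p.1.
Proof.
move=> /HQ [hV _ _]; move: hV => /= /subsetP /(_ (cex_V N1 p)).
rewrite inE eqxx => /(_ isT) vin.
by rewrite (cexV_eq V1) (set1_card vin (sv2 s2)).
Qed.

Lemma succ_unique s2 e s1' x : succ_rel N1 N2 s2 e s1' x ->
  succ N1 N2 s2 e s1' = Some x.
Proof.
move=> Hx; rewrite /succ; case: pickP => [y /asboolP Hy | H0]; last first.
  by have := H0 x; rewrite asboolT.
congr Some; apply: contrapT => nyx.
case: Hx => Vx [phi [mu [Lx Sx Px]]]; case: Hy => Vy [phi' [mu' [Ly Sy Py]]].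
case: det2 => _ D2 D3.
have E : phi' = phi by apply: (D2 s2 e).
subst phi'.
apply: (D3 s2 e phi y x Ly nyx).
  rewrite Vx Vy setIid; apply/set0Pn.
  have /cards1P [v ->] : #|V N1 s1'| == 1%N by rewrite V1.
  by exists v; rewrite inE.
by exists mu', mu; split.
Qed.


Lemma hat_contra s1 s2 a phi1 phi2 mu2 :
  (forall s1' s2', (ind_pair N1 N2 s1' s2' < ind_pair N1 N2 s1 s2)%N ->
     case3 N1 N2 s1' s2' -> ~ Q (s1', Some s2') s2') ->
  L N2 s2 a phi2 <> No ->
  Sat N1 phi1 (ch (s1, Some s2) a phi1) ->
  breaking_choice N1 N2 s1 s2 a phi2 (ch (s1, Some s2) a phi1) ->
  Sat N2 phi2 mu2 ->
  lift_rel Q (dist_hat N1 N2 s2 a (ch (s1, Some s2) a phi1)) mu2 -> False.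
Proof.
move=> IH L2 Sat1 Bc Sat2 [d [d01 [ddist [dsum dQ]]]].
move: Sat1 Bc dsum dQ ddist; set mu := ch (s1, Some s2) a phi1 => Sat1 Bc dsum dQ ddist.
have mu0 : forall s, 0 <= mu s by case: (wf1 Sat1).
have nu0 : forall p, 0 <= dist_hat N1 N2 s2 a mu p.
  by move=> p; rewrite /dist_hat; case: ifP.
have nuE : forall s1', dist_hat N1 N2 s2 a mu (s1', succ N1 N2 s2 a s1') = mu s1'.
  by move=> s1'; rewrite /dist_hat eqxx.
have F : forall s1' t, 0 < mu s1' -> 0 < d (s1', succ N1 N2 s2 a s1') t ->
    succ N1 N2 s2 a s1' = Some t /\ Q (s1', succ N1 N2 s2 a s1') t.
  move=> s1' t mp dp; have q := dQ _ _ dp; split=> //.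
  apply: succ_unique; split; first by rewrite (Vrel q).
  exists phi2, mu2; split=> //.
  rewrite -dsum (bigD1 (s1', succ N1 N2 s2 a s1')) //=.
  have : 0 <= \sum_(i | i != (s1', succ N1 N2 s2 a s1'))
              dist_hat N1 N2 s2 a mu i * d i t.
    apply: sumr_ge0 => i _; apply: mulr_ge0 => //; by case/andP: (d01 i t).
  rewrite nuE; have := mulr_gt0 mp dp; lra.
have Ex : forall s1', 0 < mu s1' -> exists t, 0 < d (s1', succ N1 N2 s2 a s1') t.
  move=> s1' mp; apply: contrapT => hn.
  have : is_dist (d (s1', succ N1 N2 s2 a s1')) by apply: ddist; rewrite nuE.
  case=> _; rewrite big1 => [|t _]; first by move/eqP; rewrite eq_sym oner_eq0.
  have := d01 (s1', succ N1 N2 s2 a s1') t; case/andP=> h0 _.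
  apply/eqP; rewrite eq_le h0 andbT leNgt; apply/negP => h; apply: hn; by exists t.
case: Bc => [[s1' [mp hN]]|[nS|[s1' [s2' [mp hS hlt]]]]].
- have [t dp] := Ex s1' mp; have [h _] := F s1' t mp dp; by rewrite hN in h.
- apply: nS; suff -> : push N1 N2 s2 a mu = mu2 by [].
  apply: funext => t; rewrite /push -dsum.
  have -> : \sum_(p : Pst S1 S2) dist_hat N1 N2 s2 a mu p * d p t =
     \sum_(s1' : S1) \sum_(x : option S2) dist_hat N1 N2 s2 a mu (s1', x) * d (s1', x) t.
    by rewrite pair_bigA; apply: eq_bigr => -[? ?] _.
  rewrite big_mkcond; apply: eq_bigr => s1' _.
  rewrite (bigD1 (succ N1 N2 s2 a s1')) //= nuE big1 ?addr0; last first.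
    by move=> x /negbTE hx; rewrite /dist_hat /= hx mul0r.
  have := mu0 s1'; rewrite le_eqVlt => /orP [/eqP <-|mp].
    by rewrite mul0r; case: ifP.
  have [t0 dp0] := Ex s1' mp; have [h0 _] := F _ _ mp dp0; rewrite h0.
  have dz : forall t', t' != t0 -> d (s1', Some t0) t' = 0.
    move=> t' nt; apply/eqP; rewrite eq_le.
    case/andP: (d01 (s1', Some t0) t') => h _; rewrite h andbT leNgt; apply/negP => dp.
    have := F s1' t' mp; rewrite h0 => /(_ dp) [[E] _]; by rewrite E eqxx in nt.
  have d1 : d (s1', Some t0) t0 = 1.
    have : is_dist (d (s1', Some t0)) by apply: ddist; rewrite -h0 nuE.
    case=> _; rewrite (bigD1 t0) //= big1 ?addr0 //; by move=> t' /dz.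
  case: (eqVneq t t0) => [->|nt]; first by rewrite eqxx d1 mulr1.
  rewrite dz // mulr0; case: eqP => // -[E]; by rewrite E eqxx in nt.
- have [t dp] := Ex s1' mp; have [h q] := F _ _ mp dp.
  rewrite hS in h q; case: h => E; subst t.
  apply: (IH s1' s2' hlt) => //; split; last by rewrite (Vrel q).
  move=> hR; have E := indpair_Rmax hR; have le := indpair_le N1 N2 s1 s2.
  rewrite /ind_pair E in hlt; have := leq_trans hlt le; by rewrite ltnn.
Qed.


Lemma nmRR k mu phi2 : no_match N2 (Rk N1 N2 k) mu phi2 -> no_match N2 (RR N1 N2) mu phi2.
Proof.
move=> nm mu' sm l; apply: (nm mu' sm); apply: lift_rel_mono l.
by move=> x y h; apply: Rmax_Rk.
Qed.

Lemma nm_of (phi1 : C1) (phi2 : C2) (Q' : S1 -> S2 -> Prop) :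
  ~ (forall mu1, Sat N1 phi1 mu1 -> exists mu2, Sat N2 phi2 mu2 /\ lift_rel Q' mu1 mu2) ->
  exists2 mu1, Sat N1 phi1 mu1 & no_match N2 Q' mu1 phi2.
Proof.
move=> h; apply: contrapT => h2; apply: h => mu1 s1; apply: contrapT => h3.
apply: h2; exists mu1 => // mu2 s2 l; apply: h3; by exists mu2.
Qed.

Lemma Breaking_inB s1 s2 a : Breaking N1 N2 s1 s2 a -> inB N1 N2 s1 s2 a.
Proof.
case=> [[B|[B|[B|B]]]|[phi1 [phi2 [mu1 [H1 H2 S nm]]]]].
- by left.
- by right; left.
- by right; right; right; left.
- by right; right; right; right; left.
- have nm' := nmRR nm.
  case E2: (L N2 s2 a phi2) H2 => // _.
  + case E1: (L N1 s1 a phi1) H1 => // _.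
    * by right; right; right; right; right; exists phi1, phi2; split=> //; exists mu1.
    * by right; right; right; right; left; split; [exists phi2 | exists phi1].
  + by right; right; left; exists phi1, phi2; split=> //; exists mu1.
Qed.

Lemma trans_contra s1 s2 a nu :
  (forall s1' s2', (ind_pair N1 N2 s1' s2' < ind_pair N1 N2 s1 s2)%N ->
     case3 N1 N2 s1' s2' -> ~ Q (s1', Some s2') s2') ->
  case3 N1 N2 s1 s2 -> Q (s1, Some s2) s2 -> Breaking N1 N2 s1 s2 a ->
  cex_L N1 N2 ch (s1, Some s2) a nu -> False.
Proof.
move=> IH c3 Hq Br Hc.
case: (HQ Hq) => _ hM hm.
have hP : L (APA_of_PA (cexPA N1 N2 s01 s02 ch)) (s1, Some s2) a nu <> No.
  by rewrite /= asboolT.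
have [phi2 [L2 hm2]] := hm a nu hP.
case: Hc => [[Hs _]|[[s2' [E c3' B [phi1 [HL _]]]]|[s2' [E c3' B [phi1 [HL Enu]]]]]].
- case: Hs => [h|[h|[_ h]]]; first by case: c3.
  + by case: c3.
  + by apply: h; apply: Breaking_inB.
- case: E => E; subst s2'.
  by case: B => -[_ h]; apply: L2; apply: h.
- case: E => E; subst s2'.
  have [mu2 [Sm2 l]] := hm2 nu erefl.
  have Sat1 : Sat N1 phi1 (ch (s1, Some s2) a phi1).
    apply: vch.1; right; exists s2; split=> //; case: B; tauto.
  have [hb _] := vch.2 s1 s2 a phi1 phi2 c3 B HL L2.
  apply: (hat_contra IH L2 Sat1 (hb Br) Sm2); by rewrite -Enu.
Qed.

Lemma core s1 s2 :
  (forall s1' s2', (ind_pair N1 N2 s1' s2' < ind_pair N1 N2 s1 s2)%N ->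
     case3 N1 N2 s1' s2' -> ~ Q (s1', Some s2') s2') ->
  case3 N1 N2 s1 s2 -> ~ Q (s1, Some s2) s2.
Proof.
move=> IH c3 Hq.
have [hRk hnot hlt] := indpair_notRmax c3.1.
have TB : forall a nu, Breaking N1 N2 s1 s2 a -> cex_L N1 N2 ch (s1, Some s2) a nu -> False.
  by move=> a nu; apply: trans_contra.
case: (HQ Hq) => _ hM hm.
apply: hnot; split=> //; split.
- by rewrite c3.2.
- move=> a phi2 Hm; apply: contrapT => Hn.
  have [nu [Lnu _]] := hM a phi2 Hm.
  have Hc : cex_L N1 N2 ch (s1, Some s2) a nu.
    by move: Lnu => /=; case: asboolP.
  apply: (TB a nu _ Hc).
  case: (EM (exists phi1, L N1 s1 a phi1 = Must)) => [[phi1 H1]|nM].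
    have [mu1 Sm1 nm] : exists2 mu1, Sat N1 phi1 mu1 &
        no_match N2 (Rk N1 N2 (indpair N1 N2 s1 s2)) mu1 phi2.
      by apply: nm_of => h; apply: Hn; exists phi1.
    by right; exists phi1, phi2, mu1; split=> //; rewrite ?H1 ?Hm.
  case: (EM (exists phi1, L N1 s1 a phi1 = May)) => [[phi1 H1]|nMa].
    by left; right; right; right; split; [exists phi2 | exists phi1].
  left; right; right; left; split; first by exists phi2.
  move=> phi1; case E: (L N1 s1 a phi1) => //.
  + by exfalso; apply: nM; exists phi1.
  + by exfalso; apply: nMa; exists phi1.
- move=> a phi1 H1; apply: contrapT => Hn.
  case: (EM (exists phi2, L N2 s2 a phi2 <> No)) => [[phi2 H2]|nN].
    have [mu1 Sm1 nm] : exists2 mu1, Sat N1 phi1 mu1 &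
        no_match N2 (Rk N1 N2 (indpair N1 N2 s1 s2)) mu1 phi2.
      by apply: nm_of => h; apply: Hn; exists phi2.
    have Br : Breaking N1 N2 s1 s2 a.
      by right; exists phi1, phi2, mu1; split.
    case E2: (L N2 s2 a phi2) H2 => // _.
    + have [nu [Lnu _]] := hM a phi2 E2.
      apply: (TB a nu Br); by move: Lnu => /=; case: asboolP.
    + apply: (TB a (dist_hat N1 N2 s2 a (ch (s1, Some s2) a phi1)) Br).
      right; right; exists s2; split=> //; last by exists phi1.
      left; exists phi1, phi2; split=> //; exists mu1; [exact: Sm1 | exact: (nmRR nm)].
  have nN' : forall phi2, L N2 s2 a phi2 = No.
    by move=> phi2; apply: contrapT => h; apply: nN; exists phi2.
  have B : Ba N1 N2 s1 s2 a \/ Bb N1 N2 s1 s2 a.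
    case E1: (L N1 s1 a phi1) H1 => // _.
    + by left; split=> //; exists phi1.
    + by right; split=> //; exists phi1.
  apply: (TB a (dist_bot (ch (s1, Some s2) a phi1))).
    by left; case: B => B; [left | right; left].
  right; left; exists s2; split=> //; by exists phi1.
Qed.

Lemma key n s1 s2 : (ind_pair N1 N2 s1 s2 <= n)%N ->
  case3 N1 N2 s1 s2 -> ~ Q (s1, Some s2) s2.
Proof.
elim: n s1 s2 => [|n IHn] s1 s2 le; apply: core => s1' s2' lt.
- by move: (leq_trans lt le).
- by apply: IHn; rewrite -ltnS; apply: leq_trans lt le.
Qed.

End Main2.


Theorem theorem5p3 (R : realType) (A AP : finType)
    (S1 S2 : finType) (C1 C2 : Type)
    (N1 : APA R A AP S1 C1) (N2 : APA R A AP S2 C2)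
    (s01 : S1) (s02 : S2) (ch : chooser R A S1 S2 C1) :
  APA_wf N1 -> APA_wf N2 ->
  SVNF N1 -> SVNF N2 ->
  deterministic N1 -> deterministic N2 ->
  init N1 = [set s01] -> init N2 = [set s02] ->
  (forall s1, #|V N1 s1| = 1) ->
  ~ refines N1 N2 ->
  valid_chooser N1 N2 ch ->
  satisfies (cexPA N1 N2 s01 s02 ch) N1 /\
  ~ satisfies (cexPA N1 N2 s01 s02 ch) N2.
Proof.
move=> wf1 wf2 sv1 sv2 det1 det2 I1 I2 V1 nref vch; split.
  exact: (part1 s02 det1 V1 vch I1).
move=> [Q [HQ Hin]].
have [s2 s2in q] := Hin (s01, Some s02) (set11 _).
move: s2in; rewrite /= I2 inE => /eqP E; subst s2.
apply: (key wf1 sv2 det2 V1 vch HQ (leqnn _) _ q); split.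
  move=> hR; apply: nref; exists (Rmax N1 N2); split; first exact: Rmax_ref.
  by move=> s1; rewrite I1 inE => /eqP ->; exists s02; rewrite // I2 inE.
by rewrite (Vrel sv2 V1 HQ q).
Qed.
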